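(* For every $\ell\ge 3$ there exists an $\ell$-core whose classes have total size at most $2\ell+1$, each class having size at most $3$ (and at least $1$). More precisely, there exist $\ell$-cores of the following types: $(1,2,\dots,2,1)$ if $\ell\equiv 1\pmod 4$; $(2,\dots,2,1)$ if $\ell\equiv 0\pmod 4$; $(2,\dots,2)$ if $\ell\equiv 3\pmod 4$; $(2,2,3,2,\dots,2)$ if $\ell\equiv 2\pmod 4$.
   Context: For $p\ge 3$, a $p$-core of type $(x_1,\dots,x_p)$ consists of pairwise disjoint finite sets $C_1,\dots,C_p$ (the classes) with $|C_i|=x_i$, together with sets $B_1,\dots,B_p\subseteq C_1\cup\dots\cup C_p$ such that $B_1\cup\dots\cup B_p=C_1\cup\dots\cup C_p$, and: (i) $B_i\cap C_i=\emptyset$ and $|B_i\cap C_j|=1$ for all $j\ne i$ (so $|B_i|=p-1$); (ii) $|B_i\cap B_j|+p$ is odd for all $1\le i,j\le p$. *)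

(* Defs.v *)
From mathcomp Require Import all_boot.
Set Implicit Arguments. Unset Strict Implicit. Unset Printing Implicit Defensive.

(* A p-core of type x : 'I_p -> nat (classes indexed 0..p-1 instead of 1..p),
   realised inside an arbitrary finite ground type T:
   classes C i, sets B i. *)
Definition is_core (p : nat) (T : finType) (C B : 'I_p -> {set T})
    (x : 'I_p -> nat) : Prop :=
  (forall i j : 'I_p, i != j -> [disjoint C i & C j]) /\
      (forall i : 'I_p, #|C i| = x i) /\
      \bigcup_(i < p) B i = \bigcup_(i < p) C i /\
      (forall i : 'I_p, B i :&: C i = set0) /\
      (forall i j : 'I_p, i != j -> #|B i :&: C j| = 1) /\
    (forall i j : 'I_p, odd (#|B i :&: B j| + p)).

Definition thm_type (l i : nat) : nat :=
  match l %% 4 with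
  | 1 => if (i == 0) || (i == l.-1) then 1 else 2
  | 0 => if i == l.-1 then 1 else 2
  | 3 => 2
  | _ => if i == 2 then 3 else 2
  end.

(* Main.v *)
Require Import Defs.
From mathcomp Require Import all_boot.
From mathcomp Require Import zify.
Set Implicit Arguments. Unset Strict Implicit. Unset Printing Implicit Defensive.
Definition cseg (P : pred nat) a b := count P (iota a (b - a)).

Lemma cseg_split P a m b : a <= m -> m <= b -> cseg P a b = cseg P a m + cseg P m b.
Proof.
move=> h1 h2; rewrite /cseg -count_cat.
have -> : b - a = (m - a) + (b - m) by lia.
by rewrite iotaD; congr (count _ (_ ++ iota _ _)); lia.
Qed.

Lemma cseg1 P a : cseg P a a.+1 = P a.
Proof. by rewrite /cseg subSnn /= addn0. Qed.

Lemma cseg1' P a b : b = a.+1 -> cseg P a b = P a.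
Proof. by move=> ->; apply: cseg1. Qed.

Lemma cseg_const P a b (v : bool) : (forall k, a <= k -> k < b -> P k = v) ->
  cseg P a b = if v then b - a else 0.
Proof.
move=> h; rewrite /cseg.
rewrite (eq_in_count (a2 := fun _ => v)); last first.
  move=> k; rewrite mem_iota => /andP[h1 h2]; apply: h => //; lia.
case: v {h}; [by rewrite count_predT size_iota | by rewrite count_pred0].
Qed.

Lemma count_odd_iota a n : count odd (iota a n) = (a + n)./2 - a./2.
Proof.
elim: n a => [|n IH] a /=; first by rewrite addn0 subnn.
rewrite IH.
have e : a.+1./2 = a./2 + odd a.
  by rewrite -{1}(odd_double_half a); case: (odd a) => /=; rewrite ?uphalf_double ?add0n ?doubleK ?addn0 ?addn1 //= uphalf_double.
lia.
Qed.

Lemma cseg_odd P a b (v : bool) : a <= b -> (forall k, a <= k -> k < b -> P k = (odd k == v)) ->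
  cseg P a b = if v then b./2 - a./2 else (b - a) - (b./2 - a./2).
Proof.
move=> hab h; rewrite /cseg.
rewrite (eq_in_count (a2 := fun k => odd k == v)); last first.
  move=> k; rewrite mem_iota => /andP[h1 h2]; apply: h => //; lia.
have e : a + (b - a) = b by lia.
case: v {h}.
  rewrite (eq_count (a2 := odd)); last by move=> k; rewrite eqb_id.
  by rewrite count_odd_iota e.
rewrite (eq_count (a2 := predC odd)); last by move=> k /=; rewrite eqbF_neg.
have := count_predC odd (iota a (b - a)); rewrite size_iota count_odd_iota e; lia.
Qed.

Lemma cardlt n m : m <= n -> #|[set c : 'I_n | val c < m]| = m.
Proof.
move=> h. rewrite cardsE cardE /enum_mem size_filter -enumT.
have -> : count (mem (fun c : 'I_n => val c < m)) (enum 'I_n) =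
   count (fun k : nat => k < m) (map val (enum 'I_n)).
  by rewrite count_map.
rewrite val_enum_ord -[n in iota 0 n]subn0.
change (cseg (fun k => k < m) 0 n = m).
rewrite (cseg_split _ (m:=m)) // (cseg_const (v:=true)); last by move=> k _ ->.
rewrite (cseg_const (v:=false)); last by move=> k hk _; lia.
lia.
Qed.

Lemma core_nat l (x : nat -> nat) (f : nat -> nat -> nat)
 (hx : forall k, k < l -> x k <= 3)
 (hf : forall k i, k < l -> i < l -> k != i -> f k i < x k)
 (hs : forall k c, k < l -> c < x k -> exists2 i, i < l & (i != k) && (f k i == c))
 (hp : forall i j, i < j -> j < l ->
    odd (count (fun k => (k != i) && (k != j) && (f k i == f k j)) (iota 0 l) + l)) :
 exists (T : finType) (C B : 'I_l -> {set T}), is_core C B (fun i : 'I_l => x i).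
Proof.
pose C := fun k : 'I_l => [set u : 'I_l * 'I_3 | (u.1 == k) && (val u.2 < x k)].
pose B := fun i : 'I_l => [set u : 'I_l * 'I_3 | (u.1 != i) && (val u.2 == f u.1 i)].
exists ([the finType of ('I_l * 'I_3)%type]), C, B.
have f3 : forall k i : 'I_l, k != i -> f k i < 3.
  by move=> k i /(hf _ _ (ltn_ord k) (ltn_ord i)) h; apply: leq_trans h (hx _ (ltn_ord k)).
have cardBB : forall i j : 'I_l, #|B i :&: B j| =
    count (fun k : nat => (k != i) && (k != j) && (f k i == f k j)) (iota 0 l).
  move=> i j.
  have inj : {in B i :&: B j &, injective (@fst 'I_l 'I_3)}.
    move=> [k c] [k' c'] /=; rewrite !inE /= => /andP[/andP[_ /eqP h1] _] /andP[/andP[_ /eqP h2] _] ek.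
    subst k'; congr pair; apply: val_inj; by rewrite /= h1 h2.
  rewrite -(card_in_imset inj).
  have -> : fst @: (B i :&: B j) = [set k : 'I_l | (val k != i) && (val k != j) && (f k i == f k j)].
    apply/setP => k; rewrite inE; apply/imsetP/idP.
    - move=> [[k' c]]; rewrite !inE /= => /andP[/andP[h1 /eqP h2] /andP[h3 /eqP h4]] ->.
      by rewrite h1 h3 -h2 -h4 eqxx.
    - move=> /andP[/andP[h1 h3] /eqP h4].
      have h5 : f k i < 3 by apply: f3.
      exists (k, Ordinal h5) => //; by rewrite !inE /= h1 h3 /= -h4 !eqxx.
  rewrite cardE /enum_mem size_filter -enumT -val_enum_ord count_map.
  by apply: eq_count => k; rewrite /= inE.
split.
  move=> i j ij; rewrite -setI_eq0; apply/eqP/setP => u; rewrite !inE.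
  apply/negP => /andP[/andP[/eqP h1 _] /andP[/eqP h2 _]]; by rewrite -h1 h2 eqxx in ij.
split.
  move=> i.
  have hxi := hx _ (ltn_ord i).
  have -> : C i = (pair i) @: [set c : 'I_3 | val c < x i].
    apply/setP => [[k c]]; rewrite !inE /=; apply/idP/imsetP.
    - move=> /andP[/eqP -> h]; exists c => //; by rewrite inE.
    - move=> [c' hc [-> ->]]; rewrite inE in hc; by rewrite eqxx.
  rewrite card_imset; last by move=> a b [].
  exact: cardlt.
split.
  apply/setP => [[k c]]; apply/bigcupP/bigcupP.
  - move=> [i _]; rewrite inE /= => /andP[h1 /eqP h2].
    exists k => //; rewrite inE /= eqxx h2 /=; exact: hf.
  - move=> [i _]; rewrite inE /= => /andP[/eqP -> h].
    have [j hj /andP[h1 /eqP h2]] := hs _ _ (ltn_ord i) h.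
    exists (Ordinal hj) => //; rewrite inE /= h2 eqxx andbT.
    apply/negP=> /eqP e; move: h1; by rewrite e eqxx.
split.
  move=> i; apply/setP => u; rewrite !inE.
  apply/negP => /andP[/andP[h1 _] /andP[h2 _]]; by rewrite h2 in h1.
split.
  move=> i j ij.
  have h5 : f j i < 3 by apply: f3; rewrite eq_sym.
  have -> : B i :&: C j = [set (j, Ordinal h5)].
    apply/setP => [[k c]]; rewrite !inE /= xpair_eqE.
    apply/idP/idP.
    - move=> /andP[/andP[h1 /eqP h2] /andP[/eqP h3 _]]; subst k.
      by rewrite eqxx /=; apply/eqP/val_inj.
    - move=> /andP[/eqP -> /eqP ->] /=; rewrite eq_sym ij eqxx /=.
      rewrite eqxx /=; apply: hf => //; by rewrite eq_sym.
  by rewrite cards1.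
move=> i j; rewrite cardBB.
case: (ltngtP i j) => hij.
- exact: hp.
- have -> : count (fun k : nat => (k != i) && (k != j) && (f k i == f k j)) (iota 0 l)
    = count (fun k : nat => (k != j) && (k != i) && (f k j == f k i)) (iota 0 l).
    by apply: eq_count => k; rewrite [_ && (k != i)]andbC [f k j == _]eq_sym.
  exact: hp.
- have e : i = j by apply: val_inj.
  subst j.
  have -> : count (fun k : nat => (k != i) && (k != i) && (f k i == f k i)) (iota 0 l)
    = count (predC (pred1 (val i))) (iota 0 l).
    by apply: eq_count => k /=; rewrite andbb eqxx andbT.
  have := count_predC (pred1 (val i)) (iota 0 l).
  rewrite (count_uniq_mem _ (iota_uniq 0 l)) mem_iota /= size_iota ltn_ord.
  have := ltn_ord i; move: (count _ _) => m hn hm.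
  have -> : m + l = (l.-1).*2 + 1 by lia.
  by rewrite addn1 /= odd_double.
Qed.


Ltac spl a m b := rewrite (cseg_split _ (a:=a) (m:=m) (b:=b)); try by lia.

Lemma oddP' n : n %% 2 = 1 -> odd n.
Proof. by rewrite modn2; case: (odd n). Qed.

Lemma evenP' n : n %% 2 = 0 -> ~~ odd n.
Proof. by rewrite modn2; case: (odd n). Qed.

Lemma nbE (a b : bool) : (nat_of_bool a == nat_of_bool b) = (a == b).
Proof. by case: a; case: b. Qed.

Ltac decb := repeat match goal with
 | |- context [?a < ?b] =>
   first [ rewrite (_ : (a < b) = true); last by lia
         | rewrite (_ : (a < b) = false); last by lia ]
 | |- context [@eq_op ?t ?a ?b] =>
   first [ rewrite (_ : (a == b) = true); last by lia
         | rewrite (_ : (a == b) = false); last by lia ]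
 end.

Ltac fin := rewrite ?uphalf_half /=; repeat match goal with H : odd ?n = ?b |- _ =>
   rewrite ?H /=; have := modn2 n; rewrite H; clear H; move=> ? end; rewrite ?negbK; first [apply: oddP' | apply: evenP']; lia.

Definition fA (k i : nat) : nat := (i < k) (+) odd i.

Lemma caseA l : 3 <= l -> l %% 4 = 3 -> exists (T : finType) (C B : 'I_l -> {set T}),
  is_core C B (fun i : 'I_l => thm_type l i).
Proof.
move=> hl hr.
have tt : forall k, thm_type l k = 2 by move=> k; rewrite /thm_type hr.
apply: (core_nat (f := fA)).
- by move=> k _; rewrite tt.
- by move=> k i _ _ _; rewrite tt /fA; case: (_ (+) _).
- move=> k c hk; rewrite tt => hc.
  case: k hk => [|k] hk.
    case: c hc => [|[|]] // _; [exists 2 | exists 1]; try lia; by rewrite /fA.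
  case: c hc => [|[|]] // _; last by exists 0; [lia | rewrite /fA].
  case: k hk => [|k] hk; first by exists 2; [lia | rewrite /fA].
  by exists 1; [lia | rewrite /fA].
- move=> i j hij hjl.
  rewrite -[l in iota 0 l]subn0; change (odd (cseg (fun k => (k != i) && (k != j) && (fA k i == fA k j)) 0 l + l)).
  spl 0 i l; spl i i.+1 l; spl i.+1 j l; spl j j.+1 l; rewrite !cseg1.
  rewrite (cseg_const (v := odd i == odd j) _ (a:=0)); try by move=> k h1 h2; rewrite /fA nbE; decb.
  rewrite (cseg_const (v := ~~ odd i == odd j) _ (a:=i.+1)); try by move=> k h1 h2; rewrite /fA nbE; decb.
  rewrite (cseg_const (v := ~~ odd i == ~~ odd j) _ (a:=j.+1)); try by move=> k h1 h2; rewrite /fA nbE; decb.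
  rewrite /fA nbE; decb.
  case oi: (odd i); case oj: (odd j) => /=; fin.
Qed.

Definition fB l (k i : nat) : nat :=
  if k == l.-1 then 0 else if i == l.-1 then nat_of_bool (odd k) else fA k i.

Ltac sidecB i j := let k := fresh "k" in move=> k ? ?; rewrite /fB /fA; decb; rewrite ?nbE /=; case: (odd k); case: (odd i); case: (odd j).

Lemma caseB l : 3 <= l -> l %% 4 = 0 -> exists (T : finType) (C B : 'I_l -> {set T}),
  is_core C B (fun i : 'I_l => thm_type l i).
Proof.
move=> hl hr.
have tt : forall k, thm_type l k = (if k == l.-1 then 1 else 2) by move=> k; rewrite /thm_type hr.
apply: (core_nat (f := fB l)).
- by move=> k _; rewrite tt; case: (_ == _).
- move=> k i _ _ _; rewrite tt /fB /fA; case: (k == l.-1) => //; case: (i == l.-1); [by case: (odd k) | by case: (_ (+) _)].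
- move=> k c hk; rewrite tt.
  case: (eqVneq k l.-1) => hks.
    case: c => // _; exists 0; first lia.
    rewrite /fB hks eqxx andbT; apply/eqP; lia.
  case: c => [|[|]] // _.
  + case: k hk hks => [|k] hk hks.
      exists 2; [lia | rewrite /fB /fA; decb; by []].
    case: k hk hks => [|k] hk hks.
      exists 2; [lia | rewrite /fB /fA; decb; by []].
    exists 1; [lia | rewrite /fB /fA; decb; by []].
  + case: k hk hks => [|k] hk hks.
      exists 1; [lia | rewrite /fB /fA; decb; by []].
    exists 0; [lia | rewrite /fB /fA; decb; by []].
- move=> i j hij hjl.
  rewrite -[l in iota 0 l]subn0; change (odd (cseg (fun k => (k != i) && (k != j) && (fB l k i == fB l k j)) 0 l + l)).
  case oi: (odd i).
  all: case: (eqVneq j l.-1) => hj.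
  1,3: subst j; spl 0 i l; spl i i.+1 l; spl i.+1 l.-1 l; rewrite !cseg1 (cseg1' _ (a:=l.-1) (b:=l)); try by lia.
  1,2: rewrite (cseg_odd (v := odd i) _ (a:=0) (b := i)); try (by lia); try by sidecB i i.
  1,2: rewrite (cseg_odd (v := ~~ odd i) _ (a:=i.+1) (b := l.-1)); try (by lia); try by sidecB i i.
  1,2: rewrite /fB /fA; decb; rewrite /= oi /=; fin.
  all: spl 0 i l; spl i i.+1 l; spl i.+1 j l; spl j j.+1 l; spl j.+1 l.-1 l; rewrite !cseg1 (cseg1' _ (a:=l.-1) (b:=l)); try by lia.
  all: case oj: (odd j).
  all: rewrite (cseg_const (v := odd i == odd j) _ (a:=0)); try (by lia); try by sidecB i j.
  all: rewrite (cseg_const (v := ~~ odd i == odd j) _ (a:=i.+1)); try (by lia); try by sidecB i j.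
  all: rewrite (cseg_const (v := odd i == odd j) _ (a:=j.+1)); try (by lia); try by sidecB i j.
  all: rewrite /fB /fA; decb; rewrite /= ?oi ?oj; fin.
Qed.

Definition fC l (k i : nat) : nat :=
  if (k == 0) || (k == l.-1) then 0 else if i == 0 then nat_of_bool (odd k)
  else if i == l.-1 then nat_of_bool (~~ odd k) else fA k i.

Ltac sidecC i j := let k := fresh "k" in move=> k ? ?; rewrite /fC /fA; decb; rewrite ?nbE /=; first [ by case: (odd k); case: (odd i); case: (odd j) | lia ].

Lemma caseC l : 3 <= l -> l %% 4 = 1 -> exists (T : finType) (C B : 'I_l -> {set T}),
  is_core C B (fun i : 'I_l => thm_type l i).
Proof.
move=> hl hr.
have tt : forall k, thm_type l k = (if (k == 0) || (k == l.-1) then 1 else 2) by move=> k; rewrite /thm_type hr.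
apply: (core_nat (f := fC l)).
- by move=> k _; rewrite tt; case: (_ || _).
- move=> k i _ _ _; rewrite tt /fC /fA; case: (_ || _) => //; case: (i == 0); first by case: (odd k).
  case: (i == l.-1); [by case: (odd k) | by case: (_ (+) _)].
- move=> k c hk; rewrite tt.
  case hks: ((k == 0) || (k == l.-1)).
    case: c => // _; exists 1; first lia.
    rewrite /fC hks; apply/andP; split => //; move: hks; case/orP => /eqP ->; lia.
  move/negbT: hks; rewrite negb_or => /andP[h1 h2] hc.
  have hks : (k == 0) || (k == l.-1) = false by lia.
  case ok: (odd k); case: c hc => [|[|]] // _.
  1,4: exists l.-1; [lia | rewrite /fC hks; decb; by rewrite ?ok].
  1,2: exists 0; [lia | rewrite /fC hks; decb; by rewrite ?ok].
- move=> i j hij hjl.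
  rewrite -[l in iota 0 l]subn0; change (odd (cseg (fun k => (k != i) && (k != j) && (fC l k i == fC l k j)) 0 l + l)).
  case: (eqVneq i 0) => hi; case: (eqVneq j l.-1) => hj.
  { subst i j. spl 0 1 l; spl 1 l.-1 l. rewrite !cseg1 (cseg1' _ (a:=l.-1) (b:=l)); try by lia.
    rewrite (cseg_const (v := false) _ (a:=1)); try (by lia); try by sidecC 0 0.
    all: rewrite /fC /fA; decb; rewrite /=; fin.
  }
  { subst i. spl 0 1 l; spl 1 j l; spl j j.+1 l; spl j.+1 l.-1 l; rewrite !cseg1 (cseg1' _ (a:=l.-1) (b:=l)); try by lia.
    case oj: (odd j).
    all: rewrite (cseg_odd (v := odd j) _ (a:=1) (b := j)); try (by lia); try by sidecC j j.
    all: rewrite (cseg_odd (v := ~~ odd j) _ (a:=j.+1) (b := l.-1)); try (by lia); try by sidecC j j.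
    all: rewrite /fC /fA; decb; rewrite /= oj /=; fin.
  }
  { subst j. spl 0 1 l; spl 1 i l; spl i i.+1 l; spl i.+1 l.-1 l; rewrite !cseg1 (cseg1' _ (a:=l.-1) (b:=l)); try by lia.
    case oi: (odd i).
    all: rewrite (cseg_odd (v := ~~ odd i) _ (a:=1) (b := i)); try (by lia); try by sidecC i i.
    all: rewrite (cseg_odd (v := odd i) _ (a:=i.+1) (b := l.-1)); try (by lia); try by sidecC i i.
    all: rewrite /fC /fA; decb; rewrite /= oi /=; fin.
  }
  { spl 0 1 l; spl 1 i l; spl i i.+1 l; spl i.+1 j l; spl j j.+1 l; spl j.+1 l.-1 l; rewrite !cseg1 (cseg1' _ (a:=l.-1) (b:=l)); try by lia.
    case oi: (odd i); case oj: (odd j).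
    all: rewrite (cseg_const (v := odd i == odd j) _ (a:=1)); try (by lia); try by sidecC i j.
    all: rewrite (cseg_const (v := ~~ odd i == odd j) _ (a:=i.+1)); try (by lia); try by sidecC i j.
    all: rewrite (cseg_const (v := odd i == odd j) _ (a:=j.+1)); try (by lia); try by sidecC i j.
    all: rewrite /fC /fA; decb; rewrite /= ?oi ?oj /=; fin.
  }
Qed.

Definition tab (k i : nat) : nat :=
  if k == 0 then (if i == 1 then 1 else 0) else if k == 1 then (if i == 0 then 1 else 0)
  else (if i == 0 then 1 else if i == 1 then 2 else 0).

Definition fD (k i : nat) : nat :=
  if 3 <= k then (if 3 <= i then fA k i else nat_of_bool (odd k))
  else if 3 <= i then 0 else tab k i.

Ltac sidecD i j := let k := fresh "k" in move=> k ? ?; rewrite /fD /fA /tab; decb; rewrite ?nbE /=; first [ by case: (odd k); case: (odd i); case: (odd j) | lia ].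

Lemma caseD l : 3 <= l -> l %% 4 = 2 -> exists (T : finType) (C B : 'I_l -> {set T}),
  is_core C B (fun i : 'I_l => thm_type l i).
Proof.
move=> hl hr.
have hl6 : 6 <= l by lia.
have tt : forall k, thm_type l k = (if k == 2 then 3 else 2) by move=> k; rewrite /thm_type hr.
apply: (core_nat (f := fD)).
- by move=> k _; rewrite tt; case: (_ == _).
- move=> k i _ _ _; rewrite tt /fD /fA /tab.
  case: (leqP 3 k) => hk.
    have -> : (k == 2) = false by lia.
    case: (3 <= i); [by case: (_ (+) _) | by case: (odd k)].
  case: k hk => [|[|[|k]]] // _; case: (leqP 3 i) => hi; decb; try done; case: i hi => [|[|[|i]]] //.
- move=> k c hk; rewrite tt.
  case: (leqP 3 k) => hk3.
    have -> : (k == 2) = false by lia.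
    move=> hc.
    have [c1|c0] : c = odd k \/ c = ~~ odd k by case: c hc => [|[|]] //; case: (odd k); auto.
      by exists 0; [lia | rewrite /fD; decb; rewrite ?c1].
    case: (ltnP k.+1 l) => hk1.
      exists k.+1; [lia | rewrite /fD /fA; decb; rewrite ?c0 /=].
      by case: (odd k).
    have ek : k = l.-1 by lia.
    have ok : odd k = true.
      have := modn2 k; rewrite ek; case: (odd l.-1) => //= h; lia.
    exists 3; [lia | rewrite /fD /fA; decb; rewrite ?c0 ?ok].
    by [].
  case: k hk hk3 => [|[|[|k]]] // hk _ /=.
  + case: c => [|[|]] // _; [exists 2 | exists 1]; try lia; by [].
  + case: c => [|[|]] // _; [exists 2 | exists 0]; try lia; by [].
  + case: c => [|[|[|]]] // _; [exists 3 | exists 0 | exists 1]; try lia; by [].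
- move=> i j hij hjl.
  rewrite -[l in iota 0 l]subn0; change (odd (cseg (fun k => (k != i) && (k != j) && (fD k i == fD k j)) 0 l + l)).
  spl 0 3 l. rewrite {1}/cseg /=.
  case: (leqP 3 i) => hi.
  { spl 3 i l; spl i i.+1 l; spl i.+1 j l; spl j j.+1 l; rewrite !cseg1.
    case oi: (odd i); case oj: (odd j).
    all: rewrite (cseg_const (v := odd i == odd j) _ (a:=3)); try (by lia); try by sidecD i j.
    all: rewrite (cseg_const (v := ~~ odd i == odd j) _ (a:=i.+1)); try (by lia); try by sidecD i j.
    all: rewrite (cseg_const (v := odd i == odd j) _ (a:=j.+1)); try (by lia); try by sidecD i j.
    all: rewrite /fD /fA /tab; decb; rewrite /= ?oi ?oj /=; fin.
  }
  case: (leqP 3 j) => hj.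
  { spl 3 j l; spl j j.+1 l; rewrite !cseg1.
    case oj: (odd j).
    all: rewrite (cseg_odd (v := odd j) _ (a:=3) (b := j)); try (by lia); try by sidecD j j.
    all: rewrite (cseg_odd (v := ~~ odd j) _ (a:=j.+1) (b := l)); try (by lia); try by sidecD j j.
    all: case: i hij hi => [|[|[|i]]] hij hi //.
    all: rewrite /fD /fA /tab; decb; rewrite /= ?oj /=; fin.
  }
  rewrite (cseg_const (v := true) _ (a:=3)); try (by lia); try by sidecD j j.
  case: i hij hi => [|[|[|i]]] hij hi //; case: j hij hjl hj => [|[|[|j]]] hij hjl hj //.
  all: rewrite /fD /fA /tab /=; fin.
Qed.

Unset Implicit Arguments.

Lemma tt_bound l i : 1 <= thm_type l i <= 3 /\ thm_type l i <= 2 + (i == 2).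
Proof.
rewrite /thm_type; case: (l %% 4) => [|[|[|[|r]]]] /=;
 case: (i == 2); case: (i == 0); case: (i == l.-1); by [].
Qed.

Lemma sumb l (hl : 3 <= l) : \sum_(i < l) thm_type l i <= 2 * l + 1.
Proof.
have Hs : \sum_(i < l) thm_type l i <= \sum_(i < l) (2 + (val i == 2)).
  by apply: leq_sum => i _; exact: (proj2 (tt_bound l i)).
apply: (leq_trans Hs).
rewrite big_split sum_nat_const card_ord /=.
have h2 : 2 < l by [].
rewrite (bigD1 (Ordinal h2)) //= big1; first by rewrite addn0 mulnC.
move=> i /eqP hi; apply/eqP; rewrite eqb0; apply/eqP => e; apply: hi; exact: val_inj.
Qed.

Theorem mainTheorem10 (l : nat) (hl : 3 <= l) :
  (exists (T : finType) (C B : 'I_l -> {set T}) (x : 'I_l -> nat),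
      is_core C B x /\ \sum_(i < l) x i <= 2 * l + 1 /\
      (forall i : 'I_l, 1 <= x i <= 3)) /\
  (exists (T : finType) (C B : 'I_l -> {set T}),
      is_core C B (fun i : 'I_l => thm_type l i)).
Proof.
have H2 : exists (T : finType) (C B : 'I_l -> {set T}),
      is_core C B (fun i : 'I_l => thm_type l i).
  have : l %% 4 < 4 by rewrite ltn_mod.
  case e: (l %% 4) => [|[|[|[|]]]] _ //.
  - exact: caseB.
  - exact: caseC.
  - exact: caseD.
  - exact: caseA.
split; last exact: H2.
move: H2 => [T [C [B H]]].
exists T, C, B, (fun i : 'I_l => thm_type l i); split => //; split; last first.
  by move=> i; case: (tt_bound l i).
exact: sumb.
Qed.
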